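(* Let $n\ge4$. Then $\operatorname{zir}(C_n)=\operatorname{Z}(C_n)=\overline{\operatorname{Z}}(C_n)=2$ and $\operatorname{ZIR}(C_n)=\lfloor n/2\rfloor$.
   Context: $C_n$ is the cycle on $n$ vertices. Zero forcing: a blue vertex $u$ changes a white vertex $w$ to blue if $w$ is the only white neighbor of $u$; $B$ is a zero forcing set if from blue set $B$ eventually all vertices are blue; $\operatorname{Z}(G)$ is the minimum size of a zero forcing set and $\overline{\operatorname{Z}}(G)$ the maximum size of an inclusion-minimal zero forcing set. A nonempty $F\subseteq V(G)$ is a fort if every $v\notin F$ has $|N(v)\cap F|\ne1$. A private fort of $x\in S$ relative to $S$ is a fort $F$ with $S\cap F=\{x\}$; $S$ is a ZIr-set if every element of $S$ has a private fort. $\operatorname{zir}(G)$ / $\operatorname{ZIR}(G)$ are the minimum / maximum cardinality of an inclusion-maximal ZIr-set. *)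

(* Defs.v *)
From mathcomp Require Import all_boot.
Set Implicit Arguments. Unset Strict Implicit. Unset Printing Implicit Defensive.

Section Graphs.
Variables (T : finType) (adj : rel T).

Definition nbhd (v : T) : {set T} := [set u | adj v u].

(* One-vertex-at-a-time zero forcing: [zf_derives B C] means that starting
   from the blue set B one can reach the blue set C by a sequence of forces
   (a blue u forces a white w when w is the only white neighbour of u). *)
Inductive zf_derives (B : {set T}) : {set T} -> Prop :=
| zf_refl : zf_derives B B
| zf_step (C : {set T}) (u w : T) :
    zf_derives B C -> u \in C -> w \notin C -> nbhd u :\: C = [set w] ->
    zf_derives B (w |: C).

Definition zero_forcing (B : {set T}) : Prop := zf_derives B [set: T].

Definition minimal_zero_forcing (B : {set T}) : Prop :=
  zero_forcing B /\ forall B' : {set T}, B' \subset B -> zero_forcing B' -> B' = B.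

Definition fort (F : {set T}) : Prop :=
  F != set0 /\ forall v, v \notin F -> #|nbhd v :&: F| != 1.

Definition private_fort (S : {set T}) (x : T) (F : {set T}) : Prop :=
  fort F /\ S :&: F = [set x].

Definition ZIr_set (S : {set T}) : Prop :=
  forall x, x \in S -> exists F, private_fort S x F.

Definition maximal_ZIr_set (S : {set T}) : Prop :=
  ZIr_set S /\ forall S' : {set T}, S \subset S' -> ZIr_set S' -> S' = S.

End Graphs.

Definition is_min_card (T : finType) (P : {set T} -> Prop) (k : nat) : Prop :=
  (exists S, P S /\ #|S| = k) /\ (forall S, P S -> k <= #|S|).
Definition is_max_card (T : finType) (P : {set T} -> Prop) (k : nat) : Prop :=
  (exists S, P S /\ #|S| = k) /\ (forall S, P S -> #|S| <= k).

Definition Z_eq (T : finType) (adj : rel T) k := is_min_card (zero_forcing adj) k.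
Definition Zbar_eq (T : finType) (adj : rel T) k :=
  is_max_card (minimal_zero_forcing adj) k.
Definition zir_eq (T : finType) (adj : rel T) k :=
  is_min_card (maximal_ZIr_set adj) k.
Definition ZIR_eq (T : finType) (adj : rel T) k :=
  is_max_card (maximal_ZIr_set adj) k.

Definition cycle_adj (n : nat) : rel 'I_n :=
  fun i j => (val j == i.+1 %% n) || (val i == j.+1 %% n).
Arguments cycle_adj n : clear implicits.

(* Main.v *)
Require Import Defs.
From mathcomp Require Import all_boot zify.
Set Implicit Arguments. Unset Strict Implicit. Unset Printing Implicit Defensive.

Lemma ord_pos n (v : 'I_n) : 0 < n.
Proof. by apply: leq_ltn_trans (ltn_ord v). Qed.

Definition sc n (v : 'I_n) : 'I_n := Ordinal (ltn_pmod v.+1 (ord_pos v)).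

Lemma succ_val n (v : 'I_n) : v.+1 %% n = if v.+1 == n then 0 else v.+1.
Proof.
case: eqP => [->|h]; first by rewrite modnn.
rewrite modn_small //; have := ltn_ord v; lia.
Qed.

Lemma adjE n (u v : 'I_n) : cycle_adj n u v = (v == sc u) || (u == sc v).
Proof. by []. Qed.

Lemma sc_inj n : injective (@sc n).
Proof.
move=> x y /(congr1 val) /=; rewrite !succ_val.
have := ltn_ord x; have := ltn_ord y.
case: eqP; case: eqP => ? ? ? ? h; apply/val_inj => /=; lia.
Qed.

Lemma iter_sc n (u : 'I_n) k : val (iter k (@sc n) u) = (u + k) %% n.
Proof.
elim: k => [|k IH] /=; first by rewrite addn0 modn_small.
by rewrite IH -addn1 modnDml addn1 addnS.
Qed.

Lemma sc_irr n (v : 'I_n) : 2 < n -> v != sc v.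
Proof.
move=> n3; apply/negP => /eqP /(congr1 val) /=; rewrite succ_val.
case: eqP => ?; lia.
Qed.

Lemma adj_irr n (v : 'I_n) : 2 < n -> ~~ cycle_adj n v v.
Proof. by move=> n3; rewrite adjE orbb; apply: sc_irr. Qed.

Lemma sc_sc n (v : 'I_n) : 2 < n -> sc (sc v) != v.
Proof.
move=> n3; apply/negP => /eqP /(congr1 val) /=.
have := succ_val v; have := succ_val (sc v); have := ltn_ord v; rewrite /=.
case: ifP => /eqP ?; case: ifP => /eqP ?; lia.
Qed.

Lemma pred_ex n (v : 'I_n) : exists x, sc x = v.
Proof.
exists (iter n.-1 (@sc n) v); apply/val_inj.
have := iter_sc v n; have := ord_pos v; case: n v => // m v _ /= ->.
by rewrite modnDr modn_small.
Qed.

Lemma fort_sc n (F : {set 'I_n}) u :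
  fort (cycle_adj n) F -> u \notin F -> sc u \notin F -> False.
Proof.
case=> Fne Ffort hu hsu.
have step: forall w, w \notin F -> sc w \notin F -> sc (sc w) \notin F.
  move=> w hw hsw; apply/negP=> hssw.
  have := Ffort (sc w) hsw.
  suff ->: nbhd (cycle_adj n) (sc w) :&: F = [set sc (sc w)] by rewrite cards1.
  apply/setP => x; rewrite !inE adjE.
  case: (x =P sc (sc w)) => [->|hx] /=; first by rewrite hssw.
  case: (sc w =P sc x) => [/sc_inj <-|] //=; by rewrite (negbTE hw).
have all: forall k, iter k (@sc n) u \notin F /\ iter k.+1 (@sc n) u \notin F.
  elim=> [|k [IH1 IH2]] //=; split => //; exact: step.
case/set0Pn: Fne => w hw.
have [h _] := all (w + n - u).
suff: iter (w + n - u) (@sc n) u = w by move=> e; rewrite e hw in h.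
apply/val_inj; rewrite iter_sc subnKC; last by have := ltn_ord u; lia.
by rewrite modnDr modn_small.
Qed.

Lemma fort_adj n (F : {set 'I_n}) u v :
  fort (cycle_adj n) F -> u \notin F -> v \notin F -> cycle_adj n u v -> False.
Proof.
move=> hF hu hv; rewrite adjE => /orP [] /eqP e; subst.
- exact: fort_sc hF hu hv.
- exact: fort_sc hF hv hu.
Qed.

Definition indep n (S : {set 'I_n}) :=
  forall a b, a \in S -> b \in S -> ~~ cycle_adj n a b.

Lemma indep_fort n (B : {set 'I_n}) : 2 < n -> indep B -> ~: B != set0 ->
  fort (cycle_adj n) (~: B).
Proof.
move=> n3 hB hne; split => // v; rewrite inE negbK => vB.
have [x hx] := pred_ex v.
have h1 : sc v \in nbhd (cycle_adj n) v :&: ~: B.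
  rewrite !inE adjE eqxx /=; apply/negP => hs; have := hB _ _ vB hs.
  by rewrite adjE eqxx.
have h2 : x \in nbhd (cycle_adj n) v :&: ~: B.
  rewrite !inE adjE -hx eqxx orbT /=; apply/negP => hs; have := hB _ _ vB hs.
  by rewrite adjE -hx eqxx orbT.
apply/negP => /cards1P [y hy].
move: h1 h2; rewrite hy !inE => /eqP e1 /eqP e2.
have := sc_sc v n3; by rewrite -{2}hx e1 -e2 eqxx.
Qed.

Lemma zf_sub (T : finType) (adj : rel T) B C : zf_derives adj B C -> B \subset C.
Proof.
elim=> [|C' u w _ IH _ _ _]; first exact: subxx.
by apply: subset_trans IH (subsetUr _ _).
Qed.

Lemma zf_fort (T : finType) (adj : rel T) B F C : fort adj F -> B :&: F = set0 ->
  zf_derives adj B C -> C :&: F = set0.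
Proof.
move=> [Fne hF] hBF; elim=> [|C' u w _ IH uC wC hN] //.
rewrite setIUl IH setU0.
apply/setP => x; rewrite !inE; apply/negP => /andP [/eqP -> wF].
have uF : u \notin F.
  by apply/negP => uF; have := in_set0 u; rewrite -IH inE uC uF.
have := hF u uF; suff ->: nbhd adj u :&: F = [set w] by rewrite cards1.
apply/setP => y; rewrite !inE; apply/idP/idP.
- move=> /andP [yN yF]; have : y \in nbhd adj u :\: C'.
    rewrite !inE yN andbT; apply/negP => yC.
    by have := in_set0 y; rewrite -IH inE yC yF.
  by rewrite hN inE.
- move/eqP => ->; rewrite wF andbT.
  have : w \in nbhd adj u :\: C' by rewrite hN inE.
  by rewrite !inE => /andP [].
Qed.

Lemma not_zf (T : finType) (adj : rel T) B F : fort adj F -> B :&: F = set0 ->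
  ~ zero_forcing adj B.
Proof.
move=> hF hBF hz; have := zf_fort hF hBF hz; rewrite setTI => e.
by case: hF; rewrite e eqxx.
Qed.

Lemma zf_of_meets (T : finType) (adj : rel T) B :
  (forall F, fort adj F -> B :&: F != set0) -> zero_forcing adj B.
Proof.
move=> hm.
suff: forall k C, #|~: C| = k -> zf_derives adj B C -> zf_derives adj B setT.
  by move/(_ _ B erefl); apply; constructor.
elim => [|k IH] C hk hC.
  by move: hC; rewrite -[C]setCK (cards0_eq hk) setC0.
case: (boolP [exists v, (v \in C) && (#|nbhd adj v :&: ~: C| == 1)]).
- move/existsP=> [v /andP [vC /cards1P [w hw]]].
  have wnC : w \notin C.
    have : w \in [set w] by rewrite inE.
    by rewrite -hw !inE => /andP [].
  apply: (IH (w |: C)); last by apply: zf_step hC vC wnC _; rewrite setDE.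
  have := cardsC C; have := cardsC (w |: C); rewrite cardsU1 wnC; lia.
- move/existsPn => h.
  have fC : fort adj (~: C).
    split; first by rewrite -card_gt0 hk.
    by move=> v; rewrite inE negbK => vC; have := h v; rewrite vC.
  have := hm _ fC; by rewrite -setDE setD_eq0 (zf_sub hC).
Qed.

Lemma subcard_eq (T : finType) (A B : {set T}) : A \subset B -> #|B| <= #|A| -> B = A.
Proof. by move=> h1 h2; apply/esym/eqP; rewrite eqEcard h1 h2. Qed.

Lemma zf_pair n (u v : 'I_n) : cycle_adj n u v -> zero_forcing (cycle_adj n) [set u; v].
Proof.
move=> huv; apply: zf_of_meets => F hF; apply/negP => /eqP e.
have nF : forall x, x \in [set u; v] -> x \notin F.
  by move=> x hx; apply/negP => xF; have := in_set0 x; rewrite -e inE hx xF.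
apply: (fort_adj hF _ _ huv); apply: nF; rewrite !inE eqxx ?orbT //.
Qed.

Lemma zf_has_adj n (B : {set 'I_n}) : 2 < n -> zero_forcing (cycle_adj n) B ->
  exists u v, [/\ u \in B, v \in B & cycle_adj n u v].
Proof.
move=> n3 hz.
case: (boolP [exists u, exists v, [&& u \in B, v \in B & cycle_adj n u v]]).
  by move/existsP => [u /existsP [v /and3P [? ? ?]]]; exists u, v.
move=> hn.
have hi : indep B.
  move=> a b aB bB; apply/negP => hab; move/negP: hn; apply.
  by apply/existsP; exists a; apply/existsP; exists b; rewrite aB bB hab.
have hne : ~: B != set0.
  apply/negP => /eqP e.
  have x0 : 'I_n by exists 0; lia.
  have hB : forall x, x \in B by move=> x; have := in_set0 x; rewrite -e inE; case: (x \in B).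
  by have := hi x0 (sc x0) (hB _) (hB _); rewrite adjE eqxx.
by case: (not_zf (indep_fort n3 hi hne) (setICr B) hz).
Qed.

Lemma adj_pair_card n (u v : 'I_n) : 2 < n -> cycle_adj n u v -> #|[set u; v]| = 2.
Proof.
move=> n3 h; rewrite cards2; case: (u =P v) => // e; subst.
by move: (adj_irr v n3); rewrite h.
Qed.

Lemma indep_le1 n (A : {set 'I_n}) : 2 < n -> #|A| <= 1 -> indep A.
Proof.
move=> n3 hA a b aA bA; case: (a =P b) => [<-|nab]; first exact: adj_irr.
have : #|[set a; b]| <= #|A| by apply: subset_leq_card; apply/subsetP => x; rewrite !inE => /orP [] /eqP ->.
by rewrite cards2; case: eqP => // _ h; exfalso; lia.
Qed.

Lemma indep_sub n (A B : {set 'I_n}) : A \subset B -> indep B -> indep A.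
Proof. by move=> /subsetP h hB a b aA bA; apply: hB; apply: h. Qed.

Lemma indep_priv n (S : {set 'I_n}) x : 2 < n -> x \in S -> indep (S :\ x) ->
  private_fort (cycle_adj n) S x (~: (S :\ x)).
Proof.
move=> n3 xS hi; split.
  apply: indep_fort => //; apply/set0Pn; exists x; by rewrite !inE eqxx.
apply/setP => y; rewrite !inE; case: (y =P x) => [->|]; by rewrite ?xS ?andbT ?andbN.
Qed.

Lemma indep_ZIr n (S : {set 'I_n}) : 2 < n -> indep S -> ZIr_set (cycle_adj n) S.
Proof.
move=> n3 hi x xS; exists (~: (S :\ x)); apply: indep_priv => //.
by apply: indep_sub hi; apply: subsetDl.
Qed.

Lemma small_ZIr n (S : {set 'I_n}) : 2 < n -> #|S| <= 2 -> ZIr_set (cycle_adj n) S.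
Proof.
move=> n3 hc x xS; exists (~: (S :\ x)); apply: indep_priv => //.
apply: indep_le1 => //; move: hc; by rewrite (cardsD1 x S) xS /= add1n ltnS.
Qed.

Lemma ZIr_indep n (S : {set 'I_n}) : ZIr_set (cycle_adj n) S -> 2 < #|S| -> indep S.
Proof.
move=> hZ hc a b aS bS; apply/negP => hab.
have : 0 < #|S :\: [set a; b]|.
  rewrite cardsD.
  have : #|S :&: [set a; b]| <= 2.
    apply: leq_trans (subset_leq_card (subsetIr _ _)) _; rewrite cards2; by case: eqP.
  lia.
rewrite card_gt0 => /set0Pn [x]; rewrite !inE negb_or => /andP [/andP [xa xb] xS].
have [F [hF hSF]] := hZ x xS.
have nF : forall y, y \in S -> y != x -> y \notin F.
  move=> y yS yx; apply/negP => yF.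
  have : y \in S :&: F by rewrite inE yS yF.
  by rewrite hSF inE (negbTE yx).
apply: (fort_adj hF _ _ hab); apply: nF => //; rewrite eq_sym //.
Qed.

Lemma indep_card n (S : {set 'I_n}) : indep S -> #|S| <= n %/ 2.
Proof.
move=> hi.
have h1 : #|(@sc n) @: S| = #|S| by apply: card_imset; apply: sc_inj.
have h2 : S :&: (@sc n) @: S = set0.
  apply/setP => x; rewrite !inE; apply/negP => /andP [xS /imsetP [a aS e]].
  by have := hi a x aS xS; rewrite adjE e eqxx.
have h3 := cardsUI S ((@sc n) @: S).
have h4 : #|S :|: (@sc n) @: S| <= n by rewrite -[X in _ <= X]card_ord max_card.
rewrite h2 cards0 h1 in h3.
have h5 : 2 * #|S| <= n by lia.
by rewrite -(mulKn #|S| (isT : 0 < 2)); apply: leq_div2r.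
Qed.

Lemma ev_lt n (i : 'I_(n %/ 2)) : (2 * i).+1 < n.
Proof.
have h := ltn_ord i.
have : 2 * (n %/ 2) <= n by rewrite mulnC leq_divM.
lia.
Qed.

Definition ev n (i : 'I_(n %/ 2)) : 'I_n := Ordinal (ltnW (ev_lt i)).

Lemma ev_inj n : injective (@ev n).
Proof. move=> i j /(congr1 val) /= h; apply/val_inj => /=; lia. Qed.

Lemma ev_indep n : indep ((@ev n) @: setT).
Proof.
move=> a b /imsetP [i _ ->] /imsetP [j _ ->].
have hi := ev_lt i; have hj := ev_lt j.
rewrite adjE; apply/negP => /orP [] /eqP /(congr1 val) /=;
  rewrite modn_small //; lia.
Qed.

Lemma half_ge2 n : 3 < n -> 2 <= n %/ 2.
Proof. by move=> h; apply: (@leq_div2r 2 4 n). Qed.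

Theorem proposition3p2 (n : nat) : 4 <= n ->
  [/\ zir_eq (cycle_adj n) 2, Z_eq (cycle_adj n) 2,
      Zbar_eq (cycle_adj n) 2 & ZIR_eq (cycle_adj n) (n %/ 2)].
Proof.
move=> h4; have n3 : 2 < n by lia.
pose x0 : 'I_n := @Ordinal n 0 (leq_trans (isT : 0 < 4) h4).
have a0 : cycle_adj n x0 (sc x0) by rewrite adjE eqxx.
have c0 := adj_pair_card n3 a0.
split.
- split.
  + exists [set x0; sc x0]; split => //; split; first by apply: small_ZIr; rewrite ?c0.
    move=> S' hsub hZ; refine (subcard_eq hsub _); rewrite leqNgt; apply/negP => hlt.
    have hgt : 2 < #|S'| by rewrite -c0.
    have hi := ZIr_indep hZ hgt.
    have i1 : x0 \in [set x0; sc x0] by rewrite !inE eqxx.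
    have i2 : sc x0 \in [set x0; sc x0] by rewrite !inE eqxx orbT.
    have := hi x0 (sc x0) (subsetP hsub _ i1) (subsetP hsub _ i2).
    by rewrite a0.
  + move=> S [hZ hmax]; rewrite leqNgt; apply/negP => hS.
    have [x hx] : exists x, S \subset [set x; sc x].
      case: (S =P set0) => [->|/eqP /set0Pn [y yS]]; first by exists x0; apply: sub0set.
      exists y; apply/subsetP => z zS; rewrite !inE; case: (z =P y) => //= zy.
      have : #|S :\ y| = 0 by move: hS; rewrite (cardsD1 y S) yS /=; set k := #|S :\ y|; lia.
      move/cards0_eq/setP/(_ z); by rewrite !inE zS andbT; move/eqP: zy => ->.
    have ax : cycle_adj n x (sc x) by rewrite adjE eqxx.
    have := hmax _ hx (small_ZIr n3 (eq_leq (adj_pair_card n3 ax))).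
    move=> e; move: hS; by rewrite -e (adj_pair_card n3 ax).
- split; first by exists [set x0; sc x0]; split => //; apply: zf_pair.
  move=> B hz; have [u [v [uB vB huv]]] := zf_has_adj n3 hz.
  rewrite -(adj_pair_card n3 huv); apply: subset_leq_card.
  by apply/subsetP => z; rewrite !inE => /orP [] /eqP ->.
- split.
  + exists [set x0; sc x0]; split => //; split; first exact: zf_pair.
    move=> B' hsub hz; have [u [v [uB vB huv]]] := zf_has_adj n3 hz.
    apply/esym; refine (subcard_eq hsub _); rewrite c0 -(adj_pair_card n3 huv).
    apply: subset_leq_card.
    by apply/subsetP => z; rewrite !inE => /orP [] /eqP ->.
  + move=> B [hz hmin]; have [u [v [uB vB huv]]] := zf_has_adj n3 hz.
    have hs : [set u; v] \subset B by apply/subsetP => z; rewrite !inE => /orP [] /eqP ->.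
    by rewrite -(hmin _ hs (zf_pair huv)) (adj_pair_card n3 huv).
- have h2 := half_ge2 h4.
  have cE : #|(@ev n) @: setT| = n %/ 2.
    by rewrite (card_imset _ (@ev_inj n)) cardsT card_ord.
  split.
  + exists ((@ev n) @: setT); split => //; split; first exact: indep_ZIr (@ev_indep n).
    move=> S' hsub hZ; refine (subcard_eq hsub _); rewrite leqNgt; apply/negP => hlt.
    have hgt : 2 < #|S'| by rewrite cE in hlt; exact: leq_ltn_trans h2 hlt.
    have hi := ZIr_indep hZ hgt.
    by have := indep_card hi; rewrite cE in hlt; rewrite leqNgt hlt.
  + move=> S [hZ _]; case: (leqP #|S| 2) => hS; first exact: leq_trans hS h2.
    exact: indep_card (ZIr_indep hZ hS).
Qed.
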